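(* Let $(A, b, c)$ be a rational $k$-level LP instance such that for all $l = 1,\ldots,k-1$ and $i = 1,\ldots,k$, $A_{li} = \begin{pmatrix} A'_{li} \\ A''_{li}\end{pmatrix}$, $b_l = \begin{pmatrix} b'_l \\ b''_l\end{pmatrix}$, with $A'_{li} = 0$ for all $l = 1,\ldots,k-1$, $i = l+1,\ldots,k$. Define a $k$-level LP instance $(\hat{A}, \hat{b}, \hat{c})$ by $\hat{A}_{li} = A''_{li}$, $\hat{b}_l = b''_l$ for all $l = 1,\ldots,k-1$, $i = 1,\ldots,k$, $\hat{c} = c$, and $$\begin{pmatrix}\hat{A}_{k1} & \hat{A}_{k2} & \cdots & \hat{A}_{kk}\end{pmatrix} = \begin{pmatrix} A'_{11} & & & \\ \vdots & \ddots & & \\ A'_{k-1\,1} & & A'_{k-1\,k-1} & \\ A_{k1} & \cdots & A_{k\,k-1} & A_{kk}\end{pmatrix},\qquad \hat{b}_k = \begin{pmatrix} b'_1 \\ \vdots \\ b'_{k-1} \\ b_k\end{pmatrix}.$$ Then the instances $(\hat{A}, \hat{b}, \hat{c})$ and $(A,b,c)$ have the same feasible set and the same optimal objective value.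
   Context: A $k$-level LP instance $(A,b,c)$ has data $A_{li} \in \mathbb{Q}^{m_l \times n_i}$, $b_l \in \mathbb{Q}^{m_l}$, $c_{li} \in \mathbb{Q}^{n_i}$. Player $l$ chooses $x_l \in \mathbb{R}^{n_l}$ after players $1,\ldots,l-1$. The $l$-th player's problem, given $x_1,\ldots,x_{l-1}$, is $\inf_{x_l,\ldots,x_k}\{\sum_{i=l}^k c_{li}^\top x_i : \sum_{i=1}^k A_{li}x_i \ge b_l,\ (x_{l+1},\ldots,x_k) \in \mathcal{S}(\text{problem of player } l+1 \text{ given } x_1,\ldots,x_l)\}$, and the $k$-th player's problem is $\inf_{x_k}\{c_{kk}^\top x_k : \sum_{i=1}^k A_{ki}x_i \ge b_k\}$. The instance is identified with the first player's problem; its feasible set and optimal value are those of the first player's problem. $\mathcal{S}(\cdot)$ denotes the optimal solution set (optimistic setting). *)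

(* Defs.v *)
From HB Require Import structures.
From mathcomp Require Import all_boot all_order all_algebra.
From mathcomp Require Import classical_sets reals constructive_ereal ereal.
Set Implicit Arguments. Unset Strict Implicit. Unset Printing Implicit Defensive.
Import Order.TTheory GRing.Theory Num.Theory.
Local Open Scope ring_scope.

(* 'I_k (0-based: player l+1 of the paper is level l here).  n i is    *)
Record mlp (k : nat) (n : 'I_k -> nat) := MLP {
  mm : 'I_k -> nat;
  mA : forall l i : 'I_k, 'M[rat]_(mm l, n i);
  mb : forall l : 'I_k, 'cV[rat]_(mm l);
  mc : forall l i : 'I_k, 'cV[rat]_(n i) }.

Section Semantics.
Variable R : realType.
Variables (k : nat) (n : 'I_k -> nat).

Definition point := forall i : 'I_k, 'cV[R]_(n i).

Definition constr (P : mlp n) (l : 'I_k) (x : point) : Prop :=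
  forall r : 'I_(mm P l),
    (map_mx ratr (mb P l)) r 0 <= (\sum_i map_mx ratr (mA P l i) *m x i) r 0.

Definition obj (P : mlp n) (l : 'I_k) (x : point) : R :=
  \sum_(i : 'I_k | (l <= i)%N) ((map_mx ratr (mc P l i))^T *m x i) 0 0.

(* the same, with the level given as a natural number (junk outside 'I_k) *)
Definition constrN (P : mlp n) (l : nat) (x : point) : Prop :=
  if (insub l : option 'I_k) is Some l' then constr P l' x else True.
Definition objN (P : mlp n) (l : nat) (x : point) : R :=
  if (insub l : option 'I_k) is Some l' then obj P l' x else 0.

Definition agree (l : nat) (x y : point) : Prop :=
  forall i : 'I_k, (i < l)%N -> x i = y i.

(* feasN P d l x : x (its components l..k-1, the others being the
   parameters fixed by the upper levels) is feasible for the problem of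
   player l, where d is the number of players below l.  The lower-level
   condition (x_{l+1},...,x_k) in S(problem of player l+1 given x_{<=l})
   is unfolded: it is feasible for that problem and optimal among all
   feasible y with the same x_1..x_l (optimistic setting). *)
Fixpoint feasN (P : mlp n) (d l : nat) (x : point) : Prop :=
  constrN P l x /\
  match d with
  | 0 => True
  | d'.+1 => feasN P d' l.+1 x /\
             (forall y : point, agree l.+1 x y -> feasN P d' l.+1 y ->
                objN P l.+1 x <= objN P l.+1 y)
  end.

(* feasible set and optimal value of the instance (= of player 1's problem);
   the optimal value is an infimum in the extended reals (+oo if infeasible) *)
Definition feasible_set (P : mlp n) : set point := [set x | feasN P k.-1 0 x].
Definition opt_value (P : mlp n) : \bar R :=
  ereal_inf [set (objN P 0 x)%:E | x in feasible_set P].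
End Semantics.

(* For levels l < k-1 the blocks A_{li} = (A'_{li}; A''_{li}),         *)
(* b_l = (b'_l; b''_l) are given through A1 = A', A2 = A'', b1 = b',   *)
(* b2 = b''.  Ak i = A_{ki}, bk = b_k for the last level.  The values  *)
(* of A1, A2, b1, b2 at the last level l = k-1 are never used.         *)
Section Instances.
Variables (k : nat) (n : 'I_k -> nat) (m1 m2 : 'I_k -> nat) (mk : nat)
  (A1 : forall l i : 'I_k, 'M[rat]_(m1 l, n i))
  (A2 : forall l i : 'I_k, 'M[rat]_(m2 l, n i))
  (b1 : forall l : 'I_k, 'cV[rat]_(m1 l))
  (b2 : forall l : 'I_k, 'cV[rat]_(m2 l))
  (Ak : forall i : 'I_k, 'M[rat]_(mk, n i)) (bk : 'cV[rat]_mk)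
  (c : forall l i : 'I_k, 'cV[rat]_(n i)).

Definition orig_m (l : 'I_k) : nat :=
  if (l < k.-1)%N then (m1 l + m2 l)%N else mk.
Definition orig_A (l i : 'I_k) : 'M[rat]_(orig_m l, n i) :=
  if (l < k.-1)%N as bb return 'M[rat]_(if bb then (m1 l + m2 l)%N else mk, n i)
  then col_mx (A1 l i) (A2 l i) else Ak i.
Definition orig_b (l : 'I_k) : 'cV[rat]_(orig_m l) :=
  if (l < k.-1)%N as bb return 'cV[rat]_(if bb then (m1 l + m2 l)%N else mk)
  then col_mx (b1 l) (b2 l) else bk.
Definition orig_inst : mlp n := @MLP k n orig_m orig_A orig_b c.

(* the levels 1..k-1 of the paper, as elements of 'I_k *)
Definition lw (j : 'I_k.-1) : 'I_k := widen_ord (leq_pred k) j.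

Definition hat_m (l : 'I_k) : nat :=
  if (l < k.-1)%N then m2 l else ((\sum_(j < k.-1) m1 (lw j)) + mk)%N.
Definition hat_A (l i : 'I_k) : 'M[rat]_(hat_m l, n i) :=
  if (l < k.-1)%N as bb
    return 'M[rat]_(if bb then m2 l else ((\sum_(j < k.-1) m1 (lw j)) + mk)%N, n i)
  then A2 l i
  else col_mx (\mxcol_(j < k.-1) A1 (lw j) i) (Ak i).
Definition hat_b (l : 'I_k) : 'cV[rat]_(hat_m l) :=
  if (l < k.-1)%N as bb
    return 'cV[rat]_(if bb then m2 l else ((\sum_(j < k.-1) m1 (lw j)) + mk)%N)
  then b2 l
  else col_mx (\mxcol_(j < k.-1) b1 (lw j)) bk.
Definition hat_inst : mlp n := @MLP k n hat_m hat_A hat_b c.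
End Instances.

Arguments feasible_set R {k n} P.
Arguments opt_value R {k n} P.

(* Main.v *)
Require Import Defs.
From HB Require Import structures.
From mathcomp Require Import all_boot all_order all_algebra.
From mathcomp Require Import classical_sets reals constructive_ereal ereal.
Set Implicit Arguments. Unset Strict Implicit. Unset Printing Implicit Defensive.
Import Order.TTheory GRing.Theory Num.Theory.
Local Open Scope ring_scope.

Section Pf.
Variable R : realType.
Variables (k : nat) (n m1 m2 : 'I_k -> nat) (mk : nat)
  (A1 : forall l i : 'I_k, 'M[rat]_(m1 l, n i))
  (A2 : forall l i : 'I_k, 'M[rat]_(m2 l, n i))
  (b1 : forall l : 'I_k, 'cV[rat]_(m1 l))
  (b2 : forall l : 'I_k, 'cV[rat]_(m2 l))
  (Ak : forall i : 'I_k, 'M[rat]_(mk, n i)) (bk : 'cV[rat]_mk)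
  (c : forall l i : 'I_k, 'cV[rat]_(n i)).
Hypothesis hk : (0 < k)%N.
Hypothesis hA1 : forall l i : 'I_k, (l < k.-1)%N -> (l < i)%N -> A1 l i = 0.

Local Notation O := (orig_inst A1 A2 b1 b2 Ak bk c).
Local Notation H := (hat_inst A1 A2 b1 b2 Ak bk c).
Local Notation pt := (Defs.point R n).

Definition rowc (bv : rat) (M : forall i : 'I_k, 'I_(n i) -> rat) (x : pt) : Prop :=
  ratr bv <= \sum_i \sum_t ratr (M i t) * x i t 0.

Lemma rowc_ext bv bv' M M' x : bv = bv' -> (forall i t, M i t = M' i t) ->
  rowc bv M x <-> rowc bv' M' x.
Proof.
move=> -> e; rewrite /rowc.
have -> : \sum_i \sum_t ratr (M i t) * x i t 0 = \sum_i \sum_t ratr (M' i t) * x i t 0 :> R.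
  by apply: eq_bigr => i _; apply: eq_bigr => t _; rewrite e.
by [].
Qed.

Lemma rowc_imp bv bv' M M' x : bv = bv' -> (forall i t, M i t = M' i t) ->
  rowc bv M x -> rowc bv' M' x.
Proof. by move=> e1 e2; case: (rowc_ext x e1 e2). Qed.

Lemma constrE (P : mlp n) l (x : pt) :
  constr P l x <-> forall r, rowc (mb P l r 0) (fun i t => mA P l i r t) x.
Proof.
have e : forall r, (\sum_i map_mx ratr (mA P l i) *m x i) r 0
   = \sum_i \sum_t ratr (mA P l i r t) * x i t 0 :> R.
  move=> r; rewrite summxE; apply: eq_bigr => i _; rewrite mxE.
  by apply: eq_bigr => t _; rewrite mxE.
by rewrite /constr /rowc; split => h r; move: (h r); rewrite e mxE.
Qed.

Lemma col_rows a b (Q : 'I_(a+b) -> Prop) :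
  (forall r, Q r) <-> (forall r, Q (lshift b r)) /\ (forall r, Q (rshift a r)).
Proof.
split; first by move=> h; split => r; apply: h.
by case=> h1 h2 r; case: (split_ordP r) => j ->.
Qed.

Lemma mxcol_rows p (p_ : 'I_p -> nat) (Q : 'I_(\sum_i p_ i) -> Prop) :
  (forall s, Q s) <-> forall i (r : 'I_(p_ i)), Q (tagnat.Rank i r).
Proof. by split=> h // s; rewrite -(tagnat.sig2K s); apply: h. Qed.

Lemma mxcol_entry p (p_ : 'I_p -> nat) m (B_ : forall i, 'M[rat]_(p_ i, m)) i r t :
  (\mxcol_i B_ i) (tagnat.Rank i r) t = B_ i r t.
Proof.
by have := congr1 (fun M : 'M[rat]_(p_ i, m) => M r t) (mxcolK B_ i); rewrite mxE.
Qed.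

Definition c1 (l : 'I_k) (x : pt) :=
  forall r, rowc (b1 l r 0) (fun i t => A1 l i r t) x.
Definition c2 (l : 'I_k) (x : pt) :=
  forall r, rowc (b2 l r 0) (fun i t => A2 l i r t) x.
Definition ck (x : pt) :=
  forall r, rowc (bk r 0) (fun i t => Ak i r t) x.

Lemma orig_lt (l : 'I_k) x : (l < k.-1)%N ->
  constr O l x <-> c1 l x /\ c2 l x.
Proof.
move=> hl; rewrite constrE /= /orig_m /orig_A /orig_b /c1 /c2.
move: hl; case: (l < k.-1)%N => // _.
rewrite col_rows; split; case=> h1 h2; split => r.
- by have := h1 r; apply: rowc_imp => [|i t]; rewrite col_mxEu.
- by have := h2 r; apply: rowc_imp => [|i t]; rewrite col_mxEd.
- by have := h1 r; apply: rowc_imp => [|i t]; rewrite col_mxEu.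
- by have := h2 r; apply: rowc_imp => [|i t]; rewrite col_mxEd.
Qed.

Lemma orig_ge (l : 'I_k) x : (l < k.-1)%N = false ->
  constr O l x <-> ck x.
Proof.
move=> hl; rewrite constrE /= /orig_m /orig_A /orig_b /ck.
by move: hl; case: (l < k.-1)%N.
Qed.

Lemma hat_lt (l : 'I_k) x : (l < k.-1)%N ->
  constr H l x <-> c2 l x.
Proof.
move=> hl; rewrite constrE /= /hat_m /hat_A /hat_b /c2.
by move: hl; case: (l < k.-1)%N.
Qed.

Lemma hat_ge (l : 'I_k) x : (l < k.-1)%N = false ->
  constr H l x <-> (forall j : 'I_k.-1, c1 (lw j) x) /\ ck x.
Proof.
move=> hl; rewrite constrE /= /hat_m /hat_A /hat_b /ck /c1.
move: hl; case: (l < k.-1)%N => // _.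
rewrite col_rows mxcol_rows; split; case=> h1 h2; split => [j r|r].
- by have := h1 j r; apply: rowc_imp => [|i t]; rewrite col_mxEu mxcol_entry.
- by have := h2 r; apply: rowc_imp => [|i t]; rewrite col_mxEd.
- by have := h1 j r; apply: rowc_imp => [|i t]; rewrite col_mxEu mxcol_entry.
- by have := h2 r; apply: rowc_imp => [|i t]; rewrite col_mxEd.
Qed.

Lemma c1_agree (j : 'I_k) (x y : pt) : (j < k.-1)%N -> agree j.+1 x y ->
  c1 j x -> c1 j y.
Proof.
move=> hj hxy h r; have := h r; rewrite /rowc.
have -> : \sum_i \sum_t ratr (A1 j i r t) * x i t 0
        = \sum_i \sum_t ratr (A1 j i r t) * y i t 0 :> R; last by [].
apply: eq_bigr => i _; case: (leqP i j) => hij.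
  by rewrite hxy.
by rewrite hA1 //; apply: eq_bigr => t _; rewrite mxE rmorph0 !mul0r.
Qed.

Definition Pk (l : nat) (x : pt) :=
  forall j : 'I_k, (j < l)%N -> (j < k.-1)%N -> c1 j x.

Lemma Pk_agree l (x y : pt) : agree l x y -> Pk l x -> Pk l y.
Proof.
move=> hxy h j hjl hj; apply: (c1_agree hj _ (h j hjl hj)).
by move=> i hi; apply: hxy; apply: leq_trans hi hjl.
Qed.

Lemma PkS (l : 'I_k) x : (l < k.-1)%N -> Pk l.+1 x <-> Pk l x /\ c1 l x.
Proof.
move=> hl; split.
  move=> h; split; last by apply: h.
  by move=> j hj; apply: h; apply: ltnW.
case=> h1 h2 j; rewrite ltnS leq_eqVlt; case/orP => [/eqP e|hj] hjk.
  by have -> : j = l by apply: val_inj.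
by apply: h1.
Qed.

Lemma Pklast x : Pk k.-1 x <-> forall j : 'I_k.-1, c1 (lw j) x.
Proof.
split.
  by move=> h j; apply: h => /=; apply: ltn_ord.
move=> h j hj _; have := h (Ordinal hj).
by have -> : lw (Ordinal hj) = j by apply: val_inj.
Qed.

Lemma constrN_ord (P : mlp n) (l : 'I_k) (x : pt) :
  constrN P l x <-> constr P l x.
Proof. by rewrite /constrN valK. Qed.

Lemma main d : forall l (x : pt), (l + d)%N = k.-1 ->
  (feasN H d l x <-> feasN O d l x /\ Pk l x).
Proof.
elim: d => [|d IH] l x.
  rewrite addn0 => el.
  have hK : (l < k)%N by rewrite el; case: (k) hk.
  have eK : l = nat_of_ord (Ordinal hK) by [].
  have hf : (Ordinal hK < k.-1)%N = false by rewrite /= el ltnn.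
  rewrite /= eK !constrN_ord (hat_ge _ hf) (orig_ge _ hf) -eK el Pklast.
  by split; [case=> [[h1 h2] _]| case=> [[h1 _] h2]].
move=> el.
have hl : (l < k.-1)%N by rewrite -el addnS ltnS leq_addr.
have hK : (l < k)%N by apply: leq_trans hl (leq_pred _).
have eK : l = nat_of_ord (Ordinal hK) by [].
have hl' : (Ordinal hK < k.-1)%N by [].
have el' : (l.+1 + d)%N = k.-1 by rewrite addSn -addnS.
rewrite /= eK !constrN_ord (hat_lt _ hl') (orig_lt _ hl') -eK.
rewrite IH // (PkS _ hl').
split.
  case=> h2 [[fo [pl c1l]] opt]; split=> //; split=> //; split=> //.
  move=> y axy fy; have hy : feasN H d l.+1 y.
    rewrite IH //; split => //.
    by apply: (Pk_agree axy); apply/(PkS _ hl').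
  exact: (opt y axy hy).
case=> [[[c1l c2l] [fo opt]] pl]; split=> //; split; first by split.
move=> y axy hy; have [fy _] := (iffLR (IH _ _ el') hy).
exact: (opt y axy fy).
Qed.

Lemma feq : feasible_set R O = feasible_set R H.
Proof.
rewrite /feasible_set; apply/seteqP; split => x /=.
  by move=> h; apply/(main (l:=0)) => //; split.
by case/(main (l:=0)).
Qed.
End Pf.

Theorem lemma3p4 (R : realType) (k : nat) (n m1 m2 : 'I_k -> nat) (mk : nat)
  (A1 : forall l i : 'I_k, 'M[rat]_(m1 l, n i))
  (A2 : forall l i : 'I_k, 'M[rat]_(m2 l, n i))
  (b1 : forall l : 'I_k, 'cV[rat]_(m1 l))
  (b2 : forall l : 'I_k, 'cV[rat]_(m2 l))
  (Ak : forall i : 'I_k, 'M[rat]_(mk, n i)) (bk : 'cV[rat]_mk)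
  (c : forall l i : 'I_k, 'cV[rat]_(n i))
  (hk : (0 < k)%N)
  (hA1 : forall l i : 'I_k, (l < k.-1)%N -> (l < i)%N -> A1 l i = 0) :
  feasible_set R (orig_inst A1 A2 b1 b2 Ak bk c)
    = feasible_set R (hat_inst A1 A2 b1 b2 Ak bk c) /\
  opt_value R (orig_inst A1 A2 b1 b2 Ak bk c)
    = opt_value R (hat_inst A1 A2 b1 b2 Ak bk c).
Proof.
have e := @feq R k n m1 m2 mk A1 A2 b1 b2 Ak bk c hk hA1.
split => //.
by rewrite /opt_value e.
Qed.
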